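(* Let $\alpha\in(0,1)$, $\sigma=1-\frac{\alpha}{2}$, and let $c^{(\alpha,\sigma)}_{i,k}$ be the L2-1$_\sigma$ coefficients defined in the context. Then for every $k\ge 0$, $$\frac{1}{c^{(\alpha,\sigma)}_{1,k}}<\frac{2\Gamma(1-\alpha)}{\tilde a^{\alpha}}\big((k+\sigma)\tau\big)^{\alpha}.$$
   Context: Let $\tilde a>0$, $T>\tilde a$, $N\in\mathbb{Z}^+$, $\tau=(T-\tilde a)/N$, $t_k=\tilde a+k\tau$ ($k=0,\dots,N$), and $t_{k+\sigma}=t_k+\sigma\tau$. For $1\le i\le k$ define $$a^{(\alpha,\sigma)}_{i,k}=\Big(\log\tfrac{t_{k+\sigma}}{t_{i-1}}\Big)^{1-\alpha}-\Big(\log\tfrac{t_{k+\sigma}}{t_{i}}\Big)^{1-\alpha},$$ $$b^{(\alpha,\sigma)}_{i,k}=\frac{1}{\log\frac{t_{i+1}}{t_{i-1}}}\Big\{\tfrac{2}{2-\alpha}\Big[\Big(\log\tfrac{t_{k+\sigma}}{t_{i-1}}\Big)^{2-\alpha}-\Big(\log\tfrac{t_{k+\sigma}}{t_{i}}\Big)^{2-\alpha}\Big]-\log\tfrac{t_i}{t_{i-1}}\Big[\Big(\log\tfrac{t_{k+\sigma}}{t_{i}}\Big)^{1-\alpha}+\Big(\log\tfrac{t_{k+\sigma}}{t_{i-1}}\Big)^{1-\alpha}\Big]\Big\}.$$ The coefficients are: $c^{(\alpha,\sigma)}_{1,0}=\frac{1}{\Gamma(2-\alpha)\log\frac{t_1}{t_0}}\big(\log\frac{t_\sigma}{t_0}\big)^{1-\alpha}$;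 for $k=1$: $c^{(\alpha,\sigma)}_{1,1}=\frac{a^{(\alpha,\sigma)}_{1,1}-b^{(\alpha,\sigma)}_{1,1}}{\Gamma(2-\alpha)\log\frac{t_1}{t_0}}$, $c^{(\alpha,\sigma)}_{2,1}=\frac{b^{(\alpha,\sigma)}_{1,1}+(\log\frac{t_{1+\sigma}}{t_1})^{1-\alpha}}{\Gamma(2-\alpha)\log\frac{t_2}{t_1}}$; for $k\ge2$: $c^{(\alpha,\sigma)}_{1,k}=\frac{a^{(\alpha,\sigma)}_{1,k}-b^{(\alpha,\sigma)}_{1,k}}{\Gamma(2-\alpha)\log\frac{t_1}{t_0}}$, $c^{(\alpha,\sigma)}_{i,k}=\frac{a^{(\alpha,\sigma)}_{i,k}+b^{(\alpha,\sigma)}_{i-1,k}-b^{(\alpha,\sigma)}_{i,k}}{\Gamma(2-\alpha)\log\frac{t_i}{t_{i-1}}}$ for $2\le i\le k$, and $c^{(\alpha,\sigma)}_{k+1,k}=\frac{b^{(\alpha,\sigma)}_{k,k}+(\log\frac{t_{k+\sigma}}{t_k})^{1-\alpha}}{\Gamma(2-\alpha)\log\frac{t_{k+1}}{t_k}}$. *)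

(* Defs.v *)
From Stdlib Require Import Reals.
From Coquelicot Require Import Coquelicot.
Open Scope R_scope.

Definition Gamma (s : R) : R :=
  RInt_gen (fun t => Rpower t (s - 1) * exp (- t)) (at_right 0) (Rbar_locally p_infty).

(* grid: tau = (T - a)/N, t_x = a + x tau  (x real, so t_{k+sigma} is tgrid a T N (k+sigma)) *)
Definition tau (a T : R) (N : nat) : R := (T - a) / INR N.
Definition tgrid (a T : R) (N : nat) (x : R) : R := a + x * tau a T N.

Definition acoef (a T : R) (N : nat) (al sg : R) (i k : nat) : R :=
  let tks := tgrid a T N (INR k + sg) in
  Rpower (ln (tks / tgrid a T N (INR (i - 1)))) (1 - al)
  - Rpower (ln (tks / tgrid a T N (INR i))) (1 - al).

Definition bcoef (a T : R) (N : nat) (al sg : R) (i k : nat) : R :=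
  let tks := tgrid a T N (INR k + sg) in
  let tim1 := tgrid a T N (INR (i - 1)) in
  let ti := tgrid a T N (INR i) in
  let tip1 := tgrid a T N (INR (i + 1)) in
  / ln (tip1 / tim1) *
  ( 2 / (2 - al) * (Rpower (ln (tks / tim1)) (2 - al) - Rpower (ln (tks / ti)) (2 - al))
    - ln (ti / tim1) * (Rpower (ln (tks / ti)) (1 - al) + Rpower (ln (tks / tim1)) (1 - al)) ).

Definition c1coef (a T : R) (N : nat) (al sg : R) (k : nat) : R :=
  let t0 := tgrid a T N 0 in
  let t1 := tgrid a T N 1 in
  match k with
  | O => / (Gamma (2 - al) * ln (t1 / t0)) * Rpower (ln (tgrid a T N sg / t0)) (1 - al)
  | S _ => (acoef a T N al sg 1 k - bcoef a T N al sg 1 k) / (Gamma (2 - al) * ln (t1 / t0))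
  end.

(* Main.v *)
Require Import Defs.
From Stdlib Require Import Reals Lra Classical.
From Coquelicot Require Import Coquelicot.
Open Scope R_scope.

Lemma Rpower_pos' x y : 0 < Rpower x y.
Proof. unfold Rpower; apply exp_pos. Qed.

Lemma is_derive_Rpower y t : 0 < t -> is_derive (fun x => Rpower x y) t (y * Rpower t (y-1)).
Proof. intros; apply is_derive_Reals, derivable_pt_lim_power; auto. Qed.

Lemma ex_derive_Rpower y t : 0 < t -> ex_derive (fun x => Rpower x y) t.
Proof. intros; eexists; apply is_derive_Rpower; auto. Qed.

Lemma Derive_Rpower y t : 0 < t -> Derive (fun x => Rpower x y) t = y * Rpower t (y-1).
Proof. intros; apply is_derive_unique, is_derive_Rpower; auto. Qed.

Lemma mono_int (f df : R -> R) (a b : R) :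
  a <= b ->
  (forall x, a <= x <= b -> is_derive f x (df x)) ->
  (forall x, a <= x <= b -> 0 <= df x) -> f a <= f b.
Proof.
  intros Hab Hd Hp.
  destruct (MVT_gen f a b df) as [c [Hc Heq]].
  - intros x Hx. apply Hd. rewrite Rmin_left in Hx by lra. rewrite Rmax_right in Hx by lra. lra.
  - intros x Hx. rewrite Rmin_left in Hx by lra. rewrite Rmax_right in Hx by lra.
    apply continuity_pt_filterlim. apply (ex_derive_continuous (K:=R_AbsRing) (V:=R_NormedModule) f x). eexists; apply Hd; lra.
  - rewrite Rmin_left in Hc by lra. rewrite Rmax_right in Hc by lra.
    assert (0 <= df c) by (apply Hp; lra). nra.
Qed.

Lemma Rpower_neg_anti t u e : e <= 0 -> 0 < t <= u -> Rpower u e <= Rpower t e.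
Proof.
  intros He Ht. replace e with (-(-e)) by ring. rewrite (Rpower_Ropp u (-e)), (Rpower_Ropp t (-e)).
  apply Rinv_le_contravar. apply Rpower_pos'. apply Rle_Rpower_l; lra.
Qed.

Lemma tangent r u v : 0 < r < 1 -> 0 < u -> 0 < v ->
  Rpower v r <= Rpower u r + r * Rpower u (r-1) * (v-u).
Proof.
  intros Hr Hu Hv. set (K := r * Rpower u (r-1)).
  destruct (Rle_or_lt u v) as [Huv|Huv].
  - assert (H := mono_int (fun t => K * t - Rpower t r) (fun t => K - r * Rpower t (r-1)) u v Huv).
    simpl in H.
    assert (K * u - Rpower u r <= K * v - Rpower v r); [|lra].
    apply H.
    + intros x Hx. auto_derive. apply ex_derive_Rpower; lra.
      rewrite Derive_Rpower by lra. ring.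
    + intros x Hx. unfold K. assert (Rpower x (r-1) <= Rpower u (r-1)).
      apply Rpower_neg_anti; lra. nra.
  - assert (H := mono_int (fun t => Rpower t r - K * t) (fun t => r * Rpower t (r-1) - K) v u (Rlt_le _ _ Huv)).
    simpl in H.
    assert (Rpower v r - K * v <= Rpower u r - K * u); [|lra].
    apply H.
    + intros x Hx. auto_derive. apply ex_derive_Rpower; lra.
      rewrite Derive_Rpower by lra. ring.
    + intros x Hx. unfold K. assert (Rpower u (r-1) <= Rpower x (r-1)).
      apply Rpower_neg_anti; lra. nra.
Qed.

Lemma second al u v : 0 < al < 1 -> 0 < v <= u ->
  Rpower u (2-al) - (2-al)*Rpower u (1-al)*(u-v) + (2-al)*(1-al)/2*Rpower u (-al)*(u-v)^2
  <= Rpower v (2-al).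
Proof.
  intros Hal Hv. set (P1 := Rpower u (1-al)). set (K2 := (2-al)*(1-al)/2*Rpower u (-al)).
  assert (H := mono_int (fun t => - (Rpower t (2-al) + (2-al)*P1*(u - t) - K2*(u-t)^2))
     (fun t => - ((2-al) * Rpower t (1-al) - (2-al)*P1 + 2*K2*(u-t))) v u (proj2 Hv)).
  simpl in H.
  assert (Hu: u - u = 0) by ring.
  assert (- (Rpower v (2 - al) + (2 - al) * P1 * (u - v) - K2 * ((u - v) * ((u - v) * 1))) <=
          - (Rpower u (2 - al) + (2 - al) * P1 * (u - u) - K2 * ((u - u) * ((u - u) * 1)))) as H2.
  { apply H.
    + intros x Hx. auto_derive. apply ex_derive_Rpower; lra.
      rewrite Derive_Rpower by lra. replace (2 - al - 1) with (1 - al) by ring. ring.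
    + intros x Hx. unfold K2, P1.
      assert (T := tangent (1-al) u x ltac:(lra) ltac:(lra) ltac:(lra)).
      replace (1 - al - 1) with (-al) in T by ring.
      assert (T2 := Rmult_le_compat_l (2-al) _ _ ltac:(lra) T). 
      match goal with |- 0 <= ?G => replace G with ((2 - al) * (Rpower u (1 - al) + (1 - al) * Rpower u (- al) * (x - u)) - (2 - al) * Rpower x (1 - al)) by field end.
      lra. }
  rewrite Hu in H2. unfold K2 in H2.
  match type of H2 with - ?X <= - ?Y => assert (E: Y <= X) by lra;
    assert (E' : Rpower u (2-al) - (2-al)*P1*(u-v) + K2*(u-v)^2 - Rpower v (2-al) = Y - X) by (unfold K2; ring) end.
  apply Rminus_le. rewrite E'. apply Rle_minus. exact E.
Qed.


Lemma mono_lim_pinfty (F : R -> R) M :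
  (forall x y, 1 <= x -> x <= y -> F x <= F y) -> (forall x, 1 <= x -> F x <= M) ->
  exists L, filterlim F (Rbar_locally p_infty) (locally L) /\ (forall x, 1 <= x -> F x <= L).
Proof.
  intros Hm HM.
  set (E := fun r => exists x, 1 <= x /\ r = F x).
  destruct (completeness E) as [L [HL1 HL2]].
  { exists M. intros r [x [Hx ->]]. auto. }
  { exists (F 1), 1. split; [lra|auto]. }
  exists L. split.
  - apply filterlim_locally. intros eps.
    assert (exists x0, 1 <= x0 /\ L - eps < F x0) as [x0 [Hx0 Hlt]].
    { destruct (classic (exists x0, 1 <= x0 /\ L - eps < F x0)) as [H|H]; auto.
      exfalso. assert (L <= L - eps). apply HL2. intros r [x [Hx ->]].
      destruct (Rle_or_lt (F x) (L - eps)); auto. exfalso; apply H; exists x; auto.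
      destruct eps; simpl in *; lra. }
    exists x0. intros x Hx. change (Rabs (F x - L) < eps).
    assert (F x0 <= F x) by (apply Hm; lra).
    assert (F x <= L) by (apply HL1; exists x; split; [lra|auto]).
    apply Rabs_def1; lra.
  - intros x Hx; apply HL1; exists x; auto.
Qed.

Lemma mono_lim_right0 (F : R -> R) m :
  (forall x y, 0 < x -> x <= y -> y <= 1 -> F x <= F y) -> (forall x, 0 < x <= 1 -> m <= F x) ->
  exists L, filterlim F (at_right 0) (locally L) /\ (forall x, 0 < x <= 1 -> L <= F x).
Proof.
  intros Hm HM.
  destruct (mono_lim_pinfty (fun y => - F (/ y)) (- m)) as [LH [HL1 HL2]].
  { intros x y Hx Hxy. assert (F (/ y) <= F (/ x)); [|lra].
    apply Hm. apply Rinv_0_lt_compat; lra. apply Rinv_le_contravar; lra.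
    rewrite <- Rinv_1. apply Rinv_le_contravar; lra. }
  { intros x Hx. assert (m <= F (/ x)); [|lra]. apply HM. split.
    apply Rinv_0_lt_compat; lra. rewrite <- Rinv_1. apply Rinv_le_contravar; lra. }
  exists (- LH). split.
  - apply filterlim_ext_loc with (fun x => - (- F (/ / x))).
    + exists (mkposreal 1 Rlt_0_1). intros y _ Hy. rewrite Rinv_inv. ring.
    + apply (filterlim_comp _ _ _ (fun x => - F (/ / x)) Ropp _ (locally LH)).
      apply (filterlim_comp _ _ _ Rinv (fun y => - F (/ y)) _ (Rbar_locally p_infty)).
      apply filterlim_Rinv_0_right. exact HL1.
      apply (filterlim_opp (V := R_NormedModule)).
  - intros x Hx. assert (- F (/ / x) <= LH). apply HL2.
    rewrite <- Rinv_1. apply Rinv_le_contravar; lra. rewrite Rinv_inv in H. lra.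
Qed.
Lemma locally_pos x : 0 < x -> locally x (fun y => 0 < y).
Proof.
  intros Hx. exists (mkposreal x Hx). intros y Hy.
  change (Rabs (y - x) < x) in Hy. apply Rabs_def2 in Hy. lra.
Qed.

Lemma gen_from_antider (f g : R -> R) la lb :
  (forall x, 0 < x -> is_derive f x (g x)) -> (forall x, 0 < x -> continuous g x) ->
  filterlim f (at_right 0) (locally la) -> filterlim f (Rbar_locally p_infty) (locally lb) ->
  is_RInt_gen g (at_right 0) (Rbar_locally p_infty) (lb - la).
Proof.
  intros Hd Hc Ha Hb.
  assert (Hprod : filter_prod (at_right 0) (Rbar_locally p_infty)
     (fun ab => 0 < fst ab /\ 0 < snd ab)).
  { apply (Filter_prod _ _ _ (fun a => 0 < a) (fun b => 0 < b)).
    exists (mkposreal 1 Rlt_0_1). intros y _ Hy. exact Hy.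
    exists 0. intros; auto.
    intros x y Hx Hy; simpl; auto. }
  apply is_RInt_gen_ext with (Derive f).
  - eapply filter_imp; [|exact Hprod]. intros [a b] [Ha' Hb'] x Hx; simpl in *.
    apply is_derive_unique, Hd.
    assert (0 < Rmin a b) by (apply Rmin_glb_lt; auto). lra.
  - apply is_RInt_gen_Derive.
    + eapply filter_imp; [|exact Hprod]. intros [a b] [Ha' Hb'] x Hx; simpl in *.
      assert (0 < Rmin a b) by (apply Rmin_glb_lt; auto).
      eexists; apply Hd; lra.
    + eapply filter_imp; [|exact Hprod]. intros [a b] [Ha' Hb'] x Hx; simpl in *.
      assert (0 < Rmin a b) by (apply Rmin_glb_lt; auto).
      apply continuous_ext_loc with g.
      * eapply filter_imp; [|apply (locally_pos x); lra]. intros y Hy.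
        symmetry; apply is_derive_unique, Hd; auto.
      * apply Hc; lra.
    + exact Ha.
    + exact Hb.
Qed.

Lemma lim_comb {T} (F : (T -> Prop) -> Prop) {FF : Filter F} (f g : T -> R) lf lg c :
  filterlim f F (locally lf) -> filterlim g F (locally lg) ->
  filterlim (fun x => - f x + c * g x) F (locally (- lf + c * lg)).
Proof.
  intros Hf Hg.
  apply (filterlim_comp_2 (F := F) (G := locally (opp lf)) (H := locally (scal c lg)) (fun x => opp (f x)) (fun x => scal c (g x)) (@plus R_NormedModule)).
  - eapply filterlim_comp; [exact Hf|]. apply (filterlim_opp (V := R_NormedModule)).
  - eapply filterlim_comp; [exact Hg|]. apply (filterlim_scal_r (V := R_NormedModule)).
  - apply (filterlim_plus (V := R_NormedModule)).
Qed.

Lemma boundary_0 al : 0 < al < 1 ->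
  filterlim (fun x => Rpower x (1-al) * exp (-x)) (at_right 0) (locally 0).
Proof.
  intros Hal. apply filterlim_locally. intros [eps Heps]. simpl.
  set (d := exp (ln eps / (1 - al))).
  assert (Hd : 0 < d) by apply exp_pos.
  exists (mkposreal d Hd). intros y Hy Hy0.
  change (Rabs (y - 0) < d) in Hy. rewrite Rminus_0_r, Rabs_pos_eq in Hy by lra.
  change (Rabs (Rpower y (1 - al) * exp (- y) - 0) < eps).
  rewrite Rminus_0_r. unfold Rpower. rewrite <- exp_plus.
  rewrite Rabs_pos_eq by (apply Rlt_le, exp_pos).
  rewrite <- (exp_ln eps) by auto. apply exp_increasing.
  assert (ln y < ln eps / (1 - al)).
  { rewrite <- (ln_exp (ln eps / (1 - al))). apply ln_increasing; auto. }
  assert ((1 - al) * ln y < ln eps).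
  { apply (Rmult_lt_compat_l (1 - al)) in H; [|lra].
    replace ((1 - al) * (ln eps / (1 - al))) with (ln eps) in H by (field; lra). auto. }
  lra.
Qed.

Lemma boundary_inf al : 0 < al < 1 ->
  filterlim (fun x => Rpower x (1-al) * exp (-x)) (Rbar_locally p_infty) (locally 0).
Proof.
  intros Hal. apply filterlim_locally. intros [eps Heps]. simpl.
  exists (Rmax 1 (- ln eps / al)). intros y Hy.
  assert (H1 : 1 < y) by (eapply Rle_lt_trans; [apply Rmax_l|exact Hy]).
  assert (H2 : - ln eps / al < y) by (eapply Rle_lt_trans; [apply Rmax_r|exact Hy]).
  change (Rabs (Rpower y (1 - al) * exp (- y) - 0) < eps).
  rewrite Rminus_0_r. unfold Rpower. rewrite <- exp_plus.
  rewrite Rabs_pos_eq by (apply Rlt_le, exp_pos).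
  rewrite <- (exp_ln eps) by auto. apply exp_increasing.
  assert (ln y <= y).
  { assert (T := exp_ineq1_le (ln y)). rewrite exp_ln in T; lra. }
  assert (- ln eps < al * y).
  { apply (Rmult_lt_compat_l al) in H2; [|lra].
    replace (al * (- ln eps / al)) with (- ln eps) in H2 by (field; lra). auto. }
  assert ((1 - al) * ln y <= (1 - al) * y) by (apply Rmult_le_compat_l; lra).
  lra.
Qed.

Definition g1 al x := Rpower x (-al) * exp (-x).
Definition F1 al x := RInt (g1 al) 1 x.

Lemma Rpower_1_base y : Rpower 1 y = 1.
Proof. unfold Rpower. rewrite ln_1, Rmult_0_r. apply exp_0. Qed.

Lemma g1_cont al x : 0 < x -> continuous (g1 al) x.
Proof.
  intros. apply (ex_derive_continuous (K:=R_AbsRing) (V:=R_NormedModule)). unfold g1.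
  auto_derive. apply ex_derive_Rpower; auto.
Qed.

Lemma g1_pos al x : 0 < g1 al x.
Proof. unfold g1. apply Rmult_lt_0_compat. apply Rpower_pos'. apply exp_pos. Qed.

Lemma g1_exRInt al a b : 0 < a -> 0 < b -> ex_RInt (g1 al) a b.
Proof.
  intros. apply (ex_RInt_continuous (V := R_CompleteNormedModule)). intros z Hz. apply g1_cont.
  assert (0 < Rmin a b) by (apply Rmin_glb_lt; auto). lra.
Qed.

Lemma F1_der al x : 0 < x -> is_derive (F1 al) x (g1 al x).
Proof.
  intros Hx. apply is_derive_RInt with 1.
  - eapply filter_imp; [|apply (locally_pos x Hx)]. intros y Hy.
    apply RInt_correct, g1_exRInt; lra.
  - apply g1_cont; auto.
Qed.

Lemma Derive_F1 al t : 0 < t -> Derive (fun x => F1 al x) t = g1 al t.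
Proof. intros; apply is_derive_unique, F1_der; auto. Qed.

Lemma F1_1 al : F1 al 1 = 0.
Proof. unfold F1. rewrite RInt_point. reflexivity. Qed.

Lemma F1_mono al x y : 0 < x -> x <= y -> F1 al x <= F1 al y.
Proof.
  intros. apply (mono_int (F1 al) (g1 al)); auto.
  intros; apply F1_der; lra. intros; apply Rlt_le, g1_pos.
Qed.

Lemma F1_ub al x : 0 < al < 1 -> 1 <= x -> F1 al x <= 1.
Proof.
  intros Hal Hx.
  assert (H := mono_int (fun t => - (F1 al t + exp (- t))) (fun t => - (g1 al t - exp (- t))) 1 x Hx).
  simpl in H. rewrite F1_1 in H.
  assert (- (0 + exp (- (1))) <= - (F1 al x + exp (- x))).
  { apply H.
    - intros t Ht. apply (is_derive_opp (fun t => F1 al t + exp (-t))).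
      apply (is_derive_plus (F1 al) (fun t => exp (-t))). apply F1_der; lra.
      auto_derive; auto. ring.
    - intros t Ht. unfold g1.
      assert (Rpower t (-al) <= 1).
      { rewrite <- (Rpower_1_base (-al)). apply Rpower_neg_anti; lra. }
      assert (0 < exp (-t)) by apply exp_pos. nra. }
  assert (exp (- (1)) < exp 0) by (apply exp_increasing; lra). rewrite exp_0 in *.
  assert (0 < exp (- x)) by apply exp_pos. lra.
Qed.

Lemma F1_lb al x : 0 < al < 1 -> 0 < x <= 1 -> - / (1 - al) <= F1 al x.
Proof.
  intros Hal Hx.
  assert (H := mono_int (fun t => - (F1 al t - Rpower t (1-al) / (1-al)))
        (fun t => - (g1 al t - Rpower t (-al))) x 1 (proj2 Hx)).
  simpl in H. rewrite F1_1, Rpower_1_base in H.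
  assert (- (F1 al x - Rpower x (1 - al) / (1 - al)) <= - (0 - 1 / (1 - al))).
  { apply H.
    - intros t Ht. auto_derive.
      split. exists (g1 al t). apply F1_der; lra. split; auto. apply ex_derive_Rpower; lra.
      rewrite Derive_Rpower by lra. rewrite (Derive_F1 al t) by lra.
      replace (1 - al - 1) with (-al) by ring. field. lra.
    - intros t Ht. unfold g1.
      assert (exp (-t) <= 1). { rewrite <- exp_0. apply Rlt_le, exp_increasing. lra. }
      assert (0 < Rpower t (-al)) by apply Rpower_pos'. nra. }
  assert (0 < Rpower x (1 - al) / (1 - al)).
  { apply Rdiv_lt_0_compat. apply Rpower_pos'. lra. }
  unfold Rdiv in *. lra.
Qed.

Lemma Gamma_facts al : 0 < al < 1 ->
  Gamma (2 - al) = (1 - al) * Gamma (1 - al) /\ 0 < Gamma (1 - al).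
Proof.
  intros Hal.
  destruct (mono_lim_right0 (F1 al) (- / (1 - al))) as [la [Hla Hla2]].
  { intros x y Hx Hxy _. apply F1_mono; auto. }
  { intros x Hx. apply F1_lb; auto. }
  destruct (mono_lim_pinfty (F1 al) 1) as [lb [Hlb Hlb2]].
  { intros x y Hx Hxy. apply F1_mono; lra. }
  { intros x Hx. apply F1_ub; auto. }
  assert (G1 : is_RInt_gen (fun t => Rpower t (-al) * exp (- t)) (at_right 0) (Rbar_locally p_infty) (lb - la)).
  { apply (gen_from_antider (F1 al) (g1 al)); auto.
    apply F1_der. apply g1_cont. }
  set (F2 := fun x => - (Rpower x (1-al) * exp (-x)) + (1 - al) * F1 al x).
  assert (G2 : is_RInt_gen (fun t => Rpower t (1-al) * exp (- t)) (at_right 0) (Rbar_locally p_infty)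
     ((- 0 + (1 - al) * lb) - (- 0 + (1 - al) * la))).
  { apply (gen_from_antider F2).
    - intros x Hx. unfold F2. auto_derive.
      split. apply ex_derive_Rpower; auto. split; auto. exists (g1 al x). apply F1_der; auto.
      rewrite Derive_Rpower by lra. rewrite (Derive_F1 al x) by lra. unfold g1.
      replace (1 - al - 1) with (-al) by ring. ring.
    - intros x Hx. apply (ex_derive_continuous (K:=R_AbsRing) (V:=R_NormedModule)).
      auto_derive. apply ex_derive_Rpower; auto.
    - apply (lim_comb (at_right 0) (fun x => Rpower x (1-al)*exp(-x)) (F1 al)). apply boundary_0; auto. exact Hla.
    - apply (lim_comb (Rbar_locally p_infty) (fun x => Rpower x (1-al)*exp(-x)) (F1 al)). apply boundary_inf; auto. exact Hlb. }
  unfold Gamma.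
  replace (1 - al - 1) with (-al) by ring. replace (2 - al - 1) with (1 - al) by ring.
  rewrite (is_RInt_gen_unique _ _ G1), (is_RInt_gen_unique _ _ G2).
  split. ring.
  assert (la <= 0) by (rewrite <- (F1_1 al); apply Hla2; lra).
  assert (0 < F1 al 2).
  { unfold F1. apply RInt_gt_0. lra. intros; apply g1_pos. intros; apply g1_cont; lra. }
  assert (F1 al 2 <= lb) by (apply Hlb2; lra).
  lra.
Qed.

Lemma ln_le' x y : 0 < x -> x <= y -> ln x <= ln y.
Proof. intros Hx [H|H]. left; apply ln_increasing; auto. right; subst; auto. Qed.

Lemma ln_div' x y : 0 < x -> 0 < y -> ln (x / y) = ln x - ln y.
Proof. intros. unfold Rdiv. rewrite ln_mult, ln_Rinv; try ring; auto. apply Rinv_0_lt_compat; auto. Qed.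

Lemma Rpower_split u e : 0 < u -> Rpower u (1 + e) = u * Rpower u e.
Proof. intros. rewrite Rpower_plus, Rpower_1; auto. Qed.

Lemma core al u0 u1 h : 0 < al < 1 -> 0 < u1 < u0 -> u0 - u1 <= h ->
  (1-al)*(u0-u1)*Rpower u0 (-al) <=
  (Rpower u0 (1-al) - Rpower u1 (1-al)) -
  / h * (2/(2-al)*(Rpower u0 (2-al) - Rpower u1 (2-al)) - (u0-u1)*(Rpower u1 (1-al) + Rpower u0 (1-al))).
Proof.
  intros Hal Hu Hh.
  assert (T := tangent (1-al) u0 u1 ltac:(lra) ltac:(lra) ltac:(lra)).
  assert (S := second al u0 u1 Hal ltac:(lra)).
  replace (1 - al - 1) with (-al) in T by ring.
  set (p := Rpower u0 (-al)) in *.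
  assert (Hp : 0 < p) by apply Rpower_pos'.
  assert (E0 : Rpower u0 (1-al) = u0 * p).
  { unfold p; rewrite <- Rpower_split by lra. f_equal; ring. }
  assert (E1 : Rpower u0 (2-al) = u0 * (u0 * p)).
  { rewrite <- E0. rewrite <- Rpower_split by lra. f_equal; ring. }
  rewrite E0, E1 in *.
  set (P1 := Rpower u1 (1-al)) in *. set (Q1 := Rpower u1 (2-al)) in *.
  set (h1 := u0 - u1) in *.
  assert (Hh1 : 0 < h1) by (unfold h1; lra).
  set (Br := 2/(2-al)*(u0 * (u0 * p) - Q1) - h1*(P1 + u0 * p)).
  assert (HA : (1-al)*h1*p <= u0 * p - P1).
  { assert (u0 * p - P1 - (1-al)*h1*p = - (P1 - (u0 * p + (1 - al) * p * (u1 - u0)))) by (unfold h1; ring).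
    lra. }
  destruct (Rle_or_lt Br 0) as [HB|HB].
  - assert (0 <= - (/ h * Br)).
    { replace (- (/ h * Br)) with (/ h * (- Br)) by ring. apply Rmult_le_pos. left; apply Rinv_0_lt_compat; lra. lra. }
    lra.
  - assert (/ h * Br <= / h1 * Br).
    { apply Rmult_le_compat_r. lra. apply Rinv_le_contravar; lra. }
    assert (Hk : (1-al)*h1*p <= (u0 * p - P1) - / h1 * Br).
    { assert (S2 : u0 * (u0 * p) - Q1 <= (2-al)*(u0*p)*h1 - (2-al)*(1-al)/2*p*h1^2).
      { clear -S. revert S. generalize ((2 - al) * (u0 * p) * h1) ((2-al)*(1-al)/2*p*h1^2) (u0*(u0*p)). intros; lra. }
      assert (S3 := Rmult_le_compat_l (2/(2-al)) _ _ ltac:(apply Rlt_le, Rdiv_lt_0_compat; lra) S2).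
      assert (Eq : (u0 * p - P1) - / h1 * Br - (1-al)*h1*p
                   = / h1 * (((2-al)*(u0*p)*h1 - (2-al)*(1-al)/2*p*h1^2) * (2/(2-al)) - 2/(2-al)*(u0 * (u0 * p) - Q1))).
      { unfold Br. field. split; lra. }
      assert (0 <= / h1 * (((2-al)*(u0*p)*h1 - (2-al)*(1-al)/2*p*h1^2) * (2/(2-al)) - 2/(2-al)*(u0 * (u0 * p) - Q1))).
      { apply Rmult_le_pos. left; apply Rinv_0_lt_compat; lra. 
        rewrite (Rmult_comm _ (2/(2-al))). lra. }
      lra. }
    lra.
Qed.


Lemma final_pos al G1 G2 u0 u1 h X : 0 < al < 1 -> G2 = (1-al)*G1 -> 0 < G1 ->
  0 < u1 < u0 -> u0 - u1 <= h -> u0 <= X ->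
  / (((Rpower u0 (1-al) - Rpower u1 (1-al)) -
  / h * (2/(2-al)*(Rpower u0 (2-al) - Rpower u1 (2-al)) - (u0-u1)*(Rpower u1 (1-al) + Rpower u0 (1-al))))
    / (G2 * (u0 - u1))) < 2 * G1 * Rpower X al.
Proof.
  intros Hal HG HG1 Hu Hh HX.
  assert (C := core al u0 u1 h Hal Hu Hh).
  set (D := (Rpower u0 (1-al) - Rpower u1 (1-al)) -
  / h * (2/(2-al)*(Rpower u0 (2-al) - Rpower u1 (2-al)) - (u0-u1)*(Rpower u1 (1-al) + Rpower u0 (1-al)))) in *.
  set (h1 := u0 - u1) in *.
  rewrite Rpower_Ropp in C.
  assert (Hq : 0 < Rpower u0 al) by apply Rpower_pos'.
  set (q := Rpower u0 al) in *.
  set (D0 := (1 - al) * h1 * / q) in *.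
  assert (HD0 : 0 < D0).
  { unfold D0. apply Rmult_lt_0_compat. apply Rmult_lt_0_compat; unfold h1; lra.
    apply Rinv_0_lt_compat; auto. }
  assert (E : / (D / (G2 * h1)) = G2 * h1 * / D).
  { rewrite HG. field. split; [|split]; unfold h1; lra. }
  rewrite E.
  assert (/ D <= / D0) by (apply Rinv_le_contravar; auto).
  assert (E2 : G2 * h1 * / D0 = G1 * q).
  { unfold D0. rewrite HG. field. split; [|split]; unfold h1; lra. }
  assert (G2 * h1 * / D <= G1 * q).
  { rewrite <- E2. apply Rmult_le_compat_l; auto. rewrite HG.
    apply Rmult_le_pos; [apply Rmult_le_pos|]; unfold h1; lra. }
  assert (q <= Rpower X al) by (apply Rle_Rpower_l; lra).
  assert (0 < G1 * Rpower X al) by (apply Rmult_lt_0_compat; [lra|apply Rpower_pos']).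
  assert (G1 * q <= G1 * Rpower X al) by (apply Rmult_le_compat_l; lra).
  lra.
Qed.

Lemma final_zero al G1 G2 h1 Ls X : 0 < al < 1 -> G2 = (1-al)*G1 -> 0 < G1 ->
  0 < h1 -> (1 - al/2) * h1 <= Ls -> Ls <= X ->
  / (/ (G2 * h1) * Rpower Ls (1-al)) < 2 * G1 * Rpower X al.
Proof.
  intros Hal HG HG1 Hh1 HL HX.
  assert (HLs : 0 < Ls) by nra.
  assert (Eq : Rpower Ls (1 - al) * Rpower Ls al = Ls).
  { rewrite <- Rpower_plus. replace (1 - al + al) with 1 by ring. apply Rpower_1; auto. }
  assert (Hr : 0 < Rpower Ls (1-al)) by apply Rpower_pos'.
  assert (Hq : 0 < Rpower Ls al) by apply Rpower_pos'.
  assert (E : / (/ (G2 * h1) * Rpower Ls (1-al)) = G2 * h1 / Rpower Ls (1-al)).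
  { rewrite HG. field. split; [|split]; lra. }
  rewrite E.
  assert (Hh1' : h1 <= Ls / (1 - al/2)).
  { apply (Rmult_le_reg_l (1 - al/2)). lra. unfold Rdiv. rewrite <- Rmult_assoc.
    rewrite (Rmult_comm _ Ls), Rmult_assoc, Rinv_r, Rmult_1_r; lra. }
  assert (G2 * h1 / Rpower Ls (1-al) <= G2 * (Ls / (1 - al/2)) / Rpower Ls (1-al)).
  { unfold Rdiv. apply Rmult_le_compat_r. left; apply Rinv_0_lt_compat; auto.
    apply Rmult_le_compat_l; auto. rewrite HG; apply Rmult_le_pos; lra. }
  assert (E2 : G2 * (Ls / (1 - al/2)) / Rpower Ls (1-al) = ((1-al)/(1-al/2)) * (G1 * Rpower Ls al)).
  { rewrite <- Eq at 1. rewrite HG. field. split; lra. }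
  assert (Rpower Ls al <= Rpower X al) by (apply Rle_Rpower_l; lra).
  assert (0 < G1 * Rpower X al) by (apply Rmult_lt_0_compat; [lra|apply Rpower_pos']).
  assert (G1 * Rpower Ls al <= G1 * Rpower X al) by (apply Rmult_le_compat_l; lra).
  assert (Hc : 0 < (1-al)/(1-al/2) < 2).
  { split. apply Rdiv_lt_0_compat; lra.
    apply (Rmult_lt_reg_r (1 - al/2)). lra. unfold Rdiv. rewrite Rmult_assoc, Rinv_l; lra. }
  assert ((1-al)/(1-al/2) * (G1 * Rpower Ls al) <= (1-al)/(1-al/2) * (G1 * Rpower X al)).
  { apply Rmult_le_compat_l; lra. }
  assert ((1-al)/(1-al/2) * (G1 * Rpower X al) < 2 * (G1 * Rpower X al)).
  { apply Rmult_lt_compat_r; lra. }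
  rewrite Rmult_assoc. lra.
Qed.

Lemma ln_1p_le z : 0 <= z -> ln (1 + z) <= z.
Proof.
  intros. rewrite <- (ln_exp z) at 2. apply ln_le'. lra. apply exp_ineq1_le.
Qed.

Theorem lemma2p3 (a T : R) (N : nat) (al : R) (k : nat) :
  0 < a -> a < T -> (0 < N)%nat -> 0 < al < 1 ->
  let sg := 1 - al / 2 in
  / c1coef a T N al sg k
    < 2 * Gamma (1 - al) / Rpower a al * Rpower ((INR k + sg) * tau a T N) al.
Proof.
  intros Ha HaT HN Hal sg.
  assert (Hsg : 1/2 < sg < 1) by (unfold sg; lra).
  assert (Htau : 0 < tau a T N).
  { unfold tau. apply Rdiv_lt_0_compat. lra. apply lt_0_INR; auto. }
  set (t := tau a T N) in *.
  destruct (Gamma_facts al Hal) as [HG HG1].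
  assert (Hk : 0 <= INR k) by apply pos_INR.
  set (X := (INR k + sg) * t / a).
  assert (HX : 0 < X) by (unfold X; apply Rdiv_lt_0_compat; [apply Rmult_lt_0_compat|]; lra).
  assert (Hrhs : 2 * Gamma (1 - al) / Rpower a al * Rpower ((INR k + sg) * t) al
                 = 2 * Gamma (1 - al) * Rpower X al).
  { replace ((INR k + sg) * t) with (a * X) by (unfold X; field; lra).
    rewrite <- Rpower_mult_distr by lra. field. apply Rgt_not_eq, Rpower_pos'. }
  rewrite Hrhs.
  assert (Htg : forall x, 0 <= x -> 0 < tgrid a T N x).
  { intros x Hx. unfold tgrid. fold t. nra. }
  assert (Hlr : forall x y, 0 <= x -> 0 <= y ->
     ln (tgrid a T N x / tgrid a T N y) = ln (tgrid a T N x) - ln (tgrid a T N y)).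
  { intros. apply ln_div'; auto. }
  assert (Hl0 : forall x, 0 <= x -> ln (tgrid a T N x / tgrid a T N 0) = ln (1 + x * t / a)).
  { intros x Hx. f_equal. unfold tgrid. fold t. field. lra. }
  destruct k as [|k].
  - unfold c1coef. cbv zeta.
    assert (Hy : 0 < t / a) by (apply Rdiv_lt_0_compat; lra).
    apply final_zero; auto.
    + rewrite Hl0 by lra. rewrite <- ln_1. apply ln_increasing; lra.
    + rewrite !Hl0 by lra. fold sg.
      assert (Tg := tangent sg 1 (1 + 1 * t / a) ltac:(lra) ltac:(lra) ltac:(lra)).
      rewrite !Rpower_1_base in Tg.
      apply ln_le' in Tg; [|apply Rpower_pos'].
      rewrite ln_Rpower in Tg. eapply Rle_trans; [exact Tg|]. right; f_equal; field; lra.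
    + rewrite Hl0 by lra. unfold X. simpl INR.
      rewrite Rplus_0_l. apply ln_1p_le.
      apply Rlt_le, Rdiv_lt_0_compat; [apply Rmult_lt_0_compat|]; lra.
  - unfold c1coef, acoef, bcoef. cbv zeta.
    replace (1 - 1)%nat with 0%nat by reflexivity. replace (1 + 1)%nat with 2%nat by reflexivity.
    replace (INR 0) with 0 by reflexivity. replace (INR 1) with 1 by reflexivity.
    replace (INR 2) with 2 by (simpl; ring).
    rewrite S_INR in *.
    set (x := INR k + 1 + sg) in *.
    assert (Hx1 : 1 < x) by (unfold x; pose proof (pos_INR k); lra).
    assert (E : ln (tgrid a T N 1 / tgrid a T N 0)
                = ln (tgrid a T N x / tgrid a T N 0) - ln (tgrid a T N x / tgrid a T N 1)).
    { rewrite !Hlr by lra. ring. }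
    rewrite E.
    apply final_pos with (h := ln (tgrid a T N 2 / tgrid a T N 0)); auto.
    + split.
      * rewrite <- ln_1. apply ln_increasing. lra.
        apply (Rmult_lt_reg_r (tgrid a T N 1)). apply Htg; lra.
        unfold Rdiv. rewrite Rmult_assoc, Rinv_l, Rmult_1_l, Rmult_1_r.
        unfold tgrid; fold t; nra. apply Rgt_not_eq, Htg; lra.
      * rewrite !Hlr by lra. assert (ln (tgrid a T N 0) < ln (tgrid a T N 1)); [|lra].
        apply ln_increasing. apply Htg; lra. unfold tgrid; fold t; nra.
    + rewrite <- E. rewrite !Hlr by lra.
      assert (ln (tgrid a T N 1) <= ln (tgrid a T N 2)); [|lra].
      apply ln_le'. apply Htg; lra. unfold tgrid; fold t; nra.
    + rewrite Hl0 by lra. unfold X. rewrite S_INR. apply ln_1p_le.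
      apply Rlt_le, Rdiv_lt_0_compat; [apply Rmult_lt_0_compat|]; lra.
Qed.
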